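(* Let $(\mathcal{X},\rho)$ be a length space and $c:\mathcal{X}\to\mathcal{Y}$ a classifier. Then for every $x\in\mathcal{X}$, $$m_c(x)=\rho(x,\partial\mathcal{X}).$$
   Context: A metric space $(\mathcal{X},\rho)$ is a length space if for all $x,x'$, $\rho(x,x')=\inf_\gamma \ell(\gamma)$, the infimum over continuous paths $\gamma:[0,1]\to\mathcal{X}$ from $x$ to $x'$ and $\ell(\gamma)$ the length of $\gamma$. Margin $m_c(x)=\inf_{x':c(x')\neq c(x)}\rho(x,x')$; $\partial\mathcal{X}=\{x:m_c(x)=0\}$; $\rho(x,A)=\inf_{a\in A}\rho(x,a)$; infima over empty sets are $+\infty$. *)

(* Defs.v *)
From HB Require Import structures.
From mathcomp Require Import all_boot all_order all_algebra.
From mathcomp Require Import all_classical all_reals ereal.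
Local Close Scope ereal_scope.
Set Implicit Arguments. Unset Strict Implicit. Unset Printing Implicit Defensive.
Import Order.TTheory GRing.Theory Num.Theory.
Local Open Scope classical_set_scope.
Local Open Scope ring_scope.

Section Defs.
Variables (R : realType) (X : Type).

Definition is_metric (rho : X -> X -> R) : Prop :=
  (forall x y, 0 <= rho x y) /\
  (forall x y, rho x y = 0 <-> x = y) /\
  (forall x y, rho x y = rho y x) /\
  (forall x y z, rho x z <= rho x y + rho y z).

Definition path_continuous (rho : X -> X -> R) (gamma : R -> X) : Prop :=
  forall t, 0 <= t <= 1 -> forall e, 0 < e -> exists2 d, 0 < d &
    forall s, 0 <= s <= 1 -> `|s - t| < d -> rho (gamma t) (gamma s) < e.

Definition is_path (rho : X -> X -> R) (x x' : X) (gamma : R -> X) : Prop :=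
  path_continuous rho gamma /\ gamma 0 = x /\ gamma 1 = x'.

Definition is_partition (n : nat) (t : nat -> R) : Prop :=
  t 0%N = 0 /\ t n = 1 /\ (forall i, (i < n)%N -> t i <= t i.+1).

Definition path_length (rho : X -> X -> R) (gamma : R -> X) : \bar R :=
  ereal_sup [set l : \bar R | exists (n : nat) (t : nat -> R),
    is_partition n t /\
    l = ((\sum_(i < n) rho (gamma (t i)) (gamma (t i.+1)))%:E)%E].

Definition is_length_space (rho : X -> X -> R) : Prop :=
  is_metric rho /\
  forall x x', (rho x x')%:E =
    ereal_inf [set path_length rho gamma | gamma in is_path rho x x'].

(* distance from a point to a set (inf over empty set = +oo) *)
Definition dist_set (rho : X -> X -> R) (x : X) (A : set X) : \bar R :=
  ereal_inf [set (rho x a)%:E | a in A].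

Variable Y : Type.

Definition margin (rho : X -> X -> R) (c : X -> Y) (x : X) : \bar R :=
  dist_set rho x [set x' | c x' <> c x].

Definition boundary (rho : X -> X -> R) (c : X -> Y) : set X :=
  [set x | margin rho c x = 0%E].

End Defs.

(* Main.v *)
Require Import Defs.
From HB Require Import structures.
From mathcomp Require Import all_boot all_order all_algebra.
From mathcomp Require Import all_classical all_reals ereal.
From mathcomp Require Import lra.
Import Order.TTheory GRing.Theory Num.Theory.
Local Open Scope classical_set_scope.
Local Open Scope ring_scope.

Section Aux.
Variables (R : realType) (X Y : Type) (rho : X -> X -> R) (c : X -> Y).
Hypothesis hm : is_metric rho.

Lemma margin_ge0 y : (0 <= margin rho c y)%E.
Proof.
apply/ereal_infP => _ [a _ <-]; rewrite lee_fin; exact: hm.1.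
Qed.

Lemma margin_le y z : c y <> c z -> (margin rho c z <= (rho z y)%:E)%E.
Proof. by move=> h; apply: ereal_inf_lbound; exists y. Qed.

Lemma margin0_approx b : margin rho c b = 0%E ->
  forall e, 0 < e -> exists y, c y <> c b /\ rho b y < e.
Proof.
move=> hb e e0.
have : (margin rho c b < e%:E)%E by rewrite hb lte_fin.
by case/ereal_inf_lt => _ [y Hy <-]; rewrite lte_fin => h; exists y.
Qed.

End Aux.

Lemma sum2 (R : realType) (F : nat -> R) : \sum_(i < 2) F i = F 0%N + F 1%N.
Proof. by rewrite big_ord_recr big_ord_recr big_ord0 /= add0r. Qed.


Theorem lemma8 (R : realType) (X Y : Type) (rho : X -> X -> R) (c : X -> Y)
  (hlen : is_length_space rho) (x : X) :
  margin rho c x = dist_set rho x (boundary rho c).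
Proof.
have hm := hlen.1.
have [h0 [heq [hsym htri]]] := hm.
apply: le_anti; apply/andP; split.
- rewrite /dist_set; apply/ereal_infP => _ [b Hb <-].
  apply/lee_addgt0Pr => e e0.
  have [y [hy hby]] := @margin0_approx _ _ _ rho c b Hb e e0.
  case: (boolp.pselect (c b = c x)) => hbx.
  + apply: le_trans (@margin_le _ _ _ rho c y _ _) _; first by rewrite -hbx.
    rewrite -EFinD lee_fin.
    apply: le_trans (htri x b y) _; rewrite lerD2l; exact: ltW.
  + apply: le_trans (@margin_le _ _ _ rho c b _ _) _; first by [].
    by rewrite -EFinD lee_fin lerDl ltW.
- rewrite /margin /dist_set; apply/ereal_infP => _ [x' Hx' <-].
  apply/lee_addgt0Pr => e e0.
  have : (ereal_inf [set path_length rho gamma | gamma in is_path rho x x']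
            < (rho x x' + e)%:E)%E by rewrite -hlen.2 lte_fin ltrDl.
  case/ereal_inf_lt => _ [g [gc [g0 g1]] <-] Hlt.
  pose T := [set t : R | 0 <= t <= 1 /\ c (g t) <> c x].
  have hT1 : T 1 by split; [rewrite ler01 lexx | rewrite g1].
  have hTn : T !=set0 by exists 1.
  have hlb : has_lbound T by exists 0 => t [/andP[]].
  pose s := inf T.
  have s0 : 0 <= s by apply: lb_le_inf => // t [/andP[]].
  have s1 : s <= 1 by apply: ge_inf.
  have below : forall t, 0 <= t -> t < s -> c (g t) = c x.
    move=> t t0 ts; apply: contrapT => hne.
    have : s <= t by apply: ge_inf => //; split => //; rewrite t0 /=; lra.
    lra.
  have hbd : boundary rho c (g s).
    rewrite /boundary /=; apply: le_anti; rewrite (@margin_ge0 _ _ _ rho c hm) andbT.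
    apply/lee_addgt0Pr => e' e'0; rewrite add0e.
    have [d d0 Hd] := gc s ltac:(by rewrite s0 s1) e' e'0.
    case: (boolp.pselect (c (g s) = c x)) => hsx.
    + have : inf T < s + d by rewrite ltrDl.
      case/(inf_lt hTn) => t [/andP[t0 t1] ht] tlt.
      have st : s <= t by apply: ge_inf => //; split => //; rewrite t0.
      apply: le_trans (@margin_le _ _ _ rho c (g t) _ _) _; first by rewrite hsx.
      rewrite lee_fin ltW // Hd ?t0 ?t1 //.
      rewrite ger0_norm; lra.
    + have sp : 0 < s.
        rewrite lt0r s0 andbT; apply/eqP => s0'.
        by apply: hsx; rewrite s0' g0.
      pose t := if s <= d / 2 then 0 else s - d / 2.
      have t0 : 0 <= t by rewrite /t; case: ifP => h; lra.
      have ts : t < s by rewrite /t; case: ifP => h; lra.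
      have htd : `|t - s| < d.
        rewrite ler0_norm; last lra.
        rewrite /t; case: ifP => h; lra.
      apply: le_trans (@margin_le _ _ _ rho c (g t) _ _) _.
        by rewrite (below t t0 ts) => /esym.
      rewrite lee_fin ltW // Hd //; rewrite t0 /=; lra.
  apply: le_trans (ereal_inf_lbound _) _; first by exists (g s).
  apply: le_trans (ltW Hlt).
  pose t := fun i : nat => if i == 0%N then 0 else if i == 1%N then s else 1.
  have hp : is_partition 2 t.
    split; first by []. split; first by [].
    by move=> [|[|i]] //= _; rewrite /t /=.
  have hsum : ((\sum_(i < 2) rho (g (t i)) (g (t i.+1)))%:E <= path_length rho g)%E.
    by apply: ereal_sup_ubound; exists 2%N, t.
  rewrite (@sum2 R (fun i => rho (g (t i)) (g (t i.+1)))) in hsum.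
  apply: le_trans hsum.
  rewrite lee_fin.
  have -> : t 0%N = 0 by [].
  have -> : t 1%N = s by [].
  by rewrite g0 lerDl.
Qed.
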